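(* Let $S=K[x_1,\ldots,x_n]$ be a polynomial ring over a field $K$, let $I\subseteq S$ be a squarefree monomial ideal all of whose minimal monomial generators have the same degree, let $x$ be one of the variables, and let $s$ be a positive integer. If $I^s$ has linear quotients, then $(I^x)^s$ has linear quotients.
   Context: A monomial ideal $J$ generated in a single degree, with minimal monomial generators $u_1,\ldots,u_r$, has linear quotients if there is an ordering $u_1>\cdots>u_r$ of these generators such that for each $1\le i<r$ the colon ideal $(u_1,\ldots,u_i):u_{i+1}$ is generated by a subset of the variables. Duplicate ideal: let $m_1,\ldots,m_q$ be all minimal monomial generators of $I$ divisible by $x$, and let $y$ be a new variable (adjoined to the ring) not dividing any generator of $I$. The duplicate ideal of $I$ by $x$ is $I^x=I+\big(\tfrac{m_1}{x}y,\ldots,\tfrac{m_q}{x}y\big)$; if $x$ divides no generator of $I$, then $I^x=I$. *)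

(* Defs.v *)
From mathcomp Require Import all_boot.
Set Implicit Arguments. Unset Strict Implicit. Unset Printing Implicit Defensive.

(* Monomials of S = K[x_0,...,x_{n-1}] are represented by exponent vectors.
   A monomial ideal is represented by a finite list of monomial generators. *)
Definition monom (n : nat) := {ffun 'I_n -> nat}.

Section Monomials.
Variable n : nat.

Definition mone : monom n := [ffun => 0%N].
Definition mvar (i : 'I_n) : monom n := [ffun j => nat_of_bool (j == i)].
Definition mmul (u v : monom n) : monom n := [ffun i => u i + v i].
Definition mdiv (u v : monom n) : monom n := [ffun i => u i - v i].
Definition mdvd (u v : monom n) : bool := [forall i, u i <= v i].
Definition mdeg (u : monom n) : nat := \sum_(i < n) u i.

Definition in_mideal (G : seq (monom n)) (w : monom n) : bool :=
  has (fun g => mdvd g w) G.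

Definition mingens (G : seq (monom n)) : seq (monom n) :=
  undup [seq g <- G | all (fun h => mdvd h g ==> mdvd g h) G].

Fixpoint mpow (G : seq (monom n)) (s : nat) : seq (monom n) :=
  if s is s'.+1 then [seq mmul a b | a <- G, b <- mpow G s'] else [:: mone].

(* the colon ideal (J : u) is generated by a subset V of the variables,
   i.e. a monomial w lies in (J : u) iff some variable of V divides w
   (monomial ideals are determined by the monomials they contain) *)
Definition colon_gen_by_vars (J : seq (monom n)) (u : monom n) : Prop :=
  exists V : {set 'I_n}, forall w : monom n,
    in_mideal J (mmul w u) = [exists i in V, 0 < w i].

Definition has_linear_quotients (J : seq (monom n)) : Prop :=
  exists L : seq (monom n),
    [/\ uniq L, mingens J =i L &
        forall k, 0 < k < size L -> colon_gen_by_vars (take k L) (nth mone L k)].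

Definition squarefree (G : seq (monom n)) : Prop :=
  forall g, g \in mingens G -> forall i, g i <= 1.

Definition equigenerated (G : seq (monom n)) : Prop :=
  exists d, forall g, g \in mingens G -> mdeg g = d.

End Monomials.

(* embedding of K[x_0..x_{n-1}] monomials into K[x_0..x_{n-1}, y], y = ord_max *)
Definition mlift (n : nat) (u : monom n) : monom n.+1 :=
  [ffun i : 'I_n.+1 => if unlift ord_max i is Some j then u j else 0%N].

Definition dup (n : nat) (G : seq (monom n)) (x : 'I_n) : seq (monom n.+1) :=
  [seq mlift g | g <- mingens G] ++
  [seq mmul (mlift (mdiv g (mvar x))) (mvar ord_max) | g <- filter (fun g : monom n => 0 < g x) (mingens G)].

(* Main.v *)
Require Import Defs.
From mathcomp Require Import all_boot zify.
Set Implicit Arguments. Unset Strict Implicit. Unset Printing Implicit Defensive.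

Section Basic.
Variable n : nat.
Implicit Types a b c d u g h p q w : monom n.
Implicit Types G H : seq (monom n).

Lemma mdvdP a b : reflect (forall i, a i <= b i) (mdvd a b).
Proof. exact: forallP. Qed.

Lemma mdvd_refl a : mdvd a a.
Proof. by apply/mdvdP. Qed.

Lemma mdvd_trans a b c : mdvd a b -> mdvd b c -> mdvd a c.
Proof. move=> /mdvdP H1 /mdvdP H2; apply/mdvdP=> i; exact: leq_trans (H1 i) (H2 i). Qed.

Lemma mdvd_anti a b : mdvd a b -> mdvd b a -> a = b.
Proof. move=> /mdvdP H1 /mdvdP H2; apply/ffunP=> i; apply/eqP; rewrite eqn_leq H1 H2. by []. Qed.

Lemma mdeg_mmul a b : mdeg (mmul a b) = mdeg a + mdeg b.
Proof. rewrite /mdeg -big_split; apply: eq_bigr => i _; by rewrite ffunE. Qed.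

Lemma mdvd_mmul a b c d : mdvd a b -> mdvd c d -> mdvd (mmul a c) (mmul b d).
Proof. move=> /mdvdP H1 /mdvdP H2; apply/mdvdP=> i; rewrite !ffunE; exact: leq_add. Qed.

Lemma mdvd_deg a b : mdvd a b -> mdeg a <= mdeg b.
Proof. move=> /mdvdP H; exact: leq_sum. Qed.

Lemma mdvd_eq_deg a b : mdvd a b -> mdeg a = mdeg b -> a = b.
Proof.
move=> /mdvdP H Hd.
have Eb : b = mmul a (mdiv b a) by apply/ffunP=> i; rewrite !ffunE subnKC.
have Hd' : mdeg b = mdeg a + mdeg (mdiv b a) by rewrite {1}Eb mdeg_mmul.
have : mdeg (mdiv b a) == 0 by apply/eqP; lia.
rewrite /mdeg sum_nat_eq0 => /forallP H0.
apply/ffunP=> i; move: (H0 i) (H i); rewrite ffunE /=; lia.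
Qed.

Lemma mdvd_lt_deg a b : mdvd a b -> ~~ mdvd b a -> mdeg a < mdeg b.
Proof.
move=> H Hn; rewrite ltn_neqAle mdvd_deg // andbT; apply/eqP=> E.
by move: Hn; rewrite (mdvd_eq_deg H E) mdvd_refl.
Qed.

Lemma mem_mingens G g : (g \in mingens G) = (g \in G) && all (fun h => mdvd h g ==> mdvd g h) G.
Proof. by rewrite /mingens mem_undup mem_filter andbC. Qed.

Lemma mingens_sub G g : g \in mingens G -> g \in G.
Proof. by rewrite mem_mingens => /andP[]. Qed.

Lemma mingens_ex G g : g \in G -> exists2 m, m \in mingens G & mdvd m g.
Proof.
elim: {g}(mdeg g) {-2}g (leqnn (mdeg g)) => [|k IH] g Hk gG.
  exists g; last exact: mdvd_refl. rewrite mem_mingens gG /=; apply/allP=> h hG; apply/implyP=> hg.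
  apply/negPn/negP=> Hn; move: (mdvd_lt_deg hg Hn); lia.
case Hm: (all (fun h => mdvd h g ==> mdvd g h) G).
  by exists g; [rewrite mem_mingens gG Hm|exact: mdvd_refl].
move/negbT: Hm; rewrite -has_predC => /hasP[h hG] /=; rewrite negb_imply => /andP[hg ngh].
have := mdvd_lt_deg hg ngh => Hl.
have [m mM mh] := IH h (ltac:(lia)) hG.
by exists m => //; exact: mdvd_trans mh hg.
Qed.

Lemma in_midealP G w : reflect (exists2 g : monom n, g \in G & mdvd g w) (in_mideal G w).
Proof. exact: hasP. Qed.

Lemma mingens_same_deg G k : (forall g, g \in G -> mdeg g = k) -> mingens G =i G.
Proof.
move=> Hd g; rewrite mem_mingens; case gG: (g \in G) => //=.
apply/allP=> h hG; apply/implyP=> hg.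
by rewrite (mdvd_eq_deg hg) ?mdvd_refl // !Hd.
Qed.

Lemma mpowP G s p : p \in mpow G s.+1 -> exists a q, [/\ a \in G, q \in mpow G s & p = mmul a q].
Proof. move=> /allpairsP[[a q] /= [aG qG ->]]; by exists a, q. Qed.

Lemma mpow_mem G s a q : a \in G -> q \in mpow G s -> mmul a q \in mpow G s.+1.
Proof. move=> aG qG /=; apply/allpairsP; by exists (a, q). Qed.

Lemma mdeg_mone : mdeg (mone n) = 0.
Proof. by rewrite /mdeg big1 // => i _; rewrite ffunE. Qed.

Lemma mpow_deg G s (k : nat) : (forall g, g \in G -> mdeg g = k) -> forall p, p \in mpow G s -> mdeg p = s * k.
Proof.
move=> Hd; elim: s => [|s IH] p.
  by rewrite /= inE => /eqP->; rewrite mdeg_mone.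
move=> /mpowP[a [q [aG qG ->]]]; by rewrite mdeg_mmul Hd // IH // mulSn.
Qed.

Lemma mpow_sub G H s : {subset G <= H} -> {subset mpow G s <= mpow H s}.
Proof.
move=> GH; elim: s => [|s IH] p //.
move=> /mpowP[a [q [aG qG ->]]]; apply: mpow_mem; [exact: GH | exact: IH].
Qed.

Lemma mpow_mingens_ex G s p : p \in mpow G s -> exists2 p', p' \in mpow (mingens G) s & mdvd p' p.
Proof.
elim: s p => [|s IH] p; first by move=> H; exists p => //; exact: mdvd_refl.
move=> /mpowP[a [q [aG qG ->]]].
have [m mM ma] := mingens_ex aG; have [q' q'M q'q] := IH q qG.
exists (mmul m q'); [exact: mpow_mem | exact: mdvd_mmul].
Qed.

Lemma mingens_mpow G s (k : nat) : (forall g, g \in mingens G -> mdeg g = k) ->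
  mingens (mpow G s) =i mpow (mingens G) s.
Proof.
move=> Hd p; apply/idP/idP.
  move=> pm; have pG := mingens_sub pm.
  have [p' p'M p'p] := mpow_mingens_ex pG.
  have p'G : p' \in mpow G s by apply: mpow_sub p'M; exact: mingens_sub.
  move: pm; rewrite mem_mingens => /andP[_ /allP/(_ p' p'G)]; rewrite p'p /= => pp'.
  by rewrite (mdvd_anti pp' p'p).
move=> pM; rewrite mem_mingens.
have pG : p \in mpow G s by apply: mpow_sub pM; exact: mingens_sub.
rewrite pG /=; apply/allP=> h hG; apply/implyP=> hp.
have [h' h'M h'h] := mpow_mingens_ex hG.
have E : h' = p.
  apply: mdvd_eq_deg; first exact: mdvd_trans h'h hp.
  by rewrite (mpow_deg Hd h'M) (mpow_deg Hd pM).
by rewrite -E.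
Qed.

End Basic.

Section Dup.
Variable n : nat.
Variable x : 'I_n.
Implicit Types a u g h p q w : monom n.
Implicit Types G H : seq (monom n).

Definition vdup u (k : nat) : monom n.+1 :=
  [ffun i => if unlift ord_max i is Some j then (if j == x then u j - k else u j) else k].

Lemma vdup_lift u k j : vdup u k (lift ord_max j) = if j == x then u j - k else u j.
Proof. by rewrite ffunE liftK. Qed.

Lemma vdup_max u k : vdup u k ord_max = k.
Proof. by rewrite ffunE unlift_none. Qed.

Lemma vdup_inj u u' k k' : k <= u x -> k' <= u' x -> vdup u k = vdup u' k' -> u = u' /\ k = k'.
Proof.
move=> hk hk' E.
have Ek : k = k' by rewrite -(vdup_max u k) -(vdup_max u' k') E.
split=> //; apply/ffunP=> j.
have := congr1 (fun f : monom n.+1 => f (lift ord_max j)) E; rewrite /= !vdup_lift.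
case: eqP => [->|_] //; subst; lia.
Qed.

Lemma vdup_mmul g u c k : c <= g x -> k <= u x ->
  mmul (vdup g c) (vdup u k) = vdup (mmul g u) (c + k).
Proof.
move=> hc hk; apply/ffunP=> i; rewrite !ffunE.
case: (unliftP ord_max i) => [j _|_] //; rewrite ?ffunE; case: eqP => [->|] //; lia.
Qed.

Lemma sum_lift (F : 'I_n.+1 -> nat) : \sum_(i < n.+1) F i = \sum_(j < n) F (lift ord_max j) + F ord_max.
Proof.
rewrite big_ord_recr /=; congr (_ + _); apply: eq_bigr => j _; congr F; apply: val_inj.
by rewrite /= /bump leqNgt ltn_ord.
Qed.

Lemma mdeg_vdup u k : k <= u x -> mdeg (vdup u k) = mdeg u.
Proof.
move=> hk; rewrite /mdeg sum_lift vdup_max.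
under eq_bigr => j _ do rewrite vdup_lift.
rewrite (bigD1 x) // [in RHS](bigD1 x) //= eqxx.
rewrite (eq_bigr (fun j => u j)); last by move=> j /negbTE ->.
by rewrite addnAC subnK.
Qed.

Lemma mlift_vdup g : mlift g = vdup g 0.
Proof.
apply/ffunP=> i; rewrite !ffunE; case: (unliftP ord_max i) => [j _|_] //.
by case: eqP => //; rewrite subn0.
Qed.

Lemma mlift1_vdup g : mmul (mlift (mdiv g (mvar x))) (mvar ord_max) = vdup g 1.
Proof.
apply/ffunP=> i; rewrite !ffunE; case: (unliftP ord_max i) => [j ->|->] /=.
  have -> : (lift ord_max j == ord_max) = false by rewrite eq_sym; apply/negbTE/neq_lift.
  rewrite !ffunE addn0; case: (j =P x) => [->|_]; by rewrite ?eqxx ?subn0.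
by rewrite eqxx.
Qed.

Lemma mem_dup G (a : monom n.+1) : a \in dup G x ->
  exists g c, [/\ g \in mingens G, c <= 1, c <= g x & a = vdup g c].
Proof.
rewrite mem_cat => /orP[/mapP[g gM ->]|/mapP[g]].
  by exists g, 0; rewrite mlift_vdup.
rewrite mem_filter => /andP[gx gM] ->; exists g, 1; by rewrite mlift1_vdup.
Qed.

Lemma dup_mem G g c : g \in mingens G -> c <= 1 -> c <= g x -> vdup g c \in dup G x.
Proof.
move=> gM c1 cg; rewrite mem_cat; case: c c1 cg => [|[|//]] _ cg.
  by apply/orP; left; apply/mapP; exists g => //; rewrite mlift_vdup.
apply/orP; right; apply/mapP; exists g; last by rewrite mlift1_vdup.
by rewrite mem_filter gM andbT.
Qed.

Lemma vdup0 : vdup (mone n) 0 = mone n.+1.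
Proof. apply/ffunP=> i; rewrite !ffunE; case: (unliftP ord_max i) => [j _|_] //; rewrite ffunE; by case: eqP. Qed.

Lemma dup_char G s (p : monom n.+1) : squarefree G ->
  (p \in mpow (dup G x) s) <-> exists u k, [/\ u \in mpow (mingens G) s, k <= u x & p = vdup u k].
Proof.
move=> sqf; elim: s p => [|s IH] p.
  rewrite /= !inE; split.
    by move=> /eqP->; exists (mone n), 0; rewrite inE eqxx vdup0 ffunE.
  move=> [u [k [+ hk ->]]]; rewrite inE => /eqP Eu; subst u.
  by move: hk; rewrite ffunE leqn0 => /eqP->; rewrite vdup0.
split.
  move=> /mpowP[a [q [aD qD ->]]].
  have [g [c [gM c1 cg ->]]] := mem_dup aD.
  have [u [k [uM hk ->]]] := (IH q).1 qD.
  exists (mmul g u), (c + k); split; [exact: mpow_mem | by rewrite ffunE; lia | exact: vdup_mmul].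
move=> [w [k [/mpowP[g [u [gM uM ->]]] hk ->]]].
move: hk; rewrite ffunE => hk.
have g1 := sqf g gM x.
case: (leqP k (u x)) => hku.
  rewrite -[k]add0n -vdup_mmul //; apply: mpow_mem; first exact: dup_mem.
  by apply/(IH _).2; exists u, k.
have Ek : k = 1 + (k - 1) by lia.
have gx : 0 < g x.
  rewrite lt0n; apply/eqP => g0; move: hk; rewrite g0 add0n leqNgt hku //.
have hk1 : k - 1 <= u x by rewrite leq_subLR; apply: leq_trans hk _; rewrite leq_add2r.
rewrite Ek -vdup_mmul //; apply: mpow_mem; first by apply: dup_mem.
by apply/(IH _).2; exists u, (k - 1).
Qed.

End Dup.

Lemma flatten_split (S T : Type) (f : S -> seq T) (L : seq S) A p B :
  flatten (map f L) = A ++ p :: B ->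
  exists L1 u L2 C D, [/\ L = L1 ++ u :: L2, f u = C ++ p :: D & A = flatten (map f L1) ++ C].
Proof.
elim: L A => [|u L IH] A /=; first by case: A.
move=> E; case: (ltnP (size A) (size (f u))) => h.
  have Ht : take (size A) (f u) = A.
    by move: (congr1 (take (size A)) E); rewrite take_cat h take_size_cat.
  have Hd : drop (size A) (f u) ++ flatten (map f L) = p :: B.
    by move: (congr1 (drop (size A)) E); rewrite drop_cat h drop_size_cat.
  case Hdd: (drop (size A) (f u)) Hd => [|p' t] Hd.
    by move: (congr1 size Hdd); rewrite size_drop /=; lia.
  case: Hd => Ep _; subst p'.
  exists [::], u, L, A, t; split => //.
  by rewrite -(cat_take_drop (size A) (f u)) Ht Hdd.
have Ht : take (size (f u)) A = f u.
  move: (congr1 (take (size (f u))) E); rewrite take_size_cat //.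
  by rewrite -{1}(cat_take_drop (size (f u)) A) -catA take_size_cat // size_takel.
have Hd : flatten (map f L) = drop (size (f u)) A ++ p :: B.
  move: (congr1 (drop (size (f u))) E); rewrite drop_size_cat //.
  by rewrite -{1}(cat_take_drop (size (f u)) A) -catA drop_size_cat // size_takel.
have [L1 [u' [L2 [C [D [E1 E2 E3]]]]]] := IH _ Hd.
exists (u :: L1), u', L2, C, D; split => //=; first by rewrite E1.
by rewrite -catA -E3 -{1}Ht cat_take_drop.
Qed.

Section LQ.
Variable n : nat.

Lemma LQ_of (L : seq (monom n)) :
  (forall k, 0 < k < size L -> colon_gen_by_vars (take k L) (nth (mone n) L k)) ->
  forall A p B, L = A ++ p :: B -> 0 < size A -> colon_gen_by_vars A p.
Proof.
move=> H A p B E hA; have := H (size A); rewrite E take_size_cat // nth_cat ltnn subnn /=.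
apply; rewrite hA size_cat /=; lia.
Qed.

Lemma LQ_to (L : seq (monom n)) :
  (forall A p B, L = A ++ p :: B -> 0 < size A -> colon_gen_by_vars A p) ->
  forall k, 0 < k < size L -> colon_gen_by_vars (take k L) (nth (mone n) L k).
Proof.
move=> H k /andP[k0 kL]; apply: (H _ _ (drop k.+1 L)); last by rewrite size_takel //; lia.
by rewrite -drop_nth // cat_take_drop.
Qed.

End LQ.

Lemma mmulE m (a b : monom m) i : mmul a b i = a i + b i.
Proof. by rewrite ffunE. Qed.
Lemma mvarE m (z i : 'I_m) : mvar z i = (i == z).
Proof. by rewrite ffunE. Qed.

Section Core.
Variable n : nat.
Variable x : 'I_n.
Implicit Types u g w : monom n.

Definition fdup u : seq (monom n.+1) := [seq vdup x u k | k <- iota 0 (u x).+1].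
Definition Ldup (L : seq (monom n)) := flatten (map fdup L).

Lemma mem_fdup p u : p \in fdup u -> exists2 k, k <= u x & p = vdup x u k.
Proof. by move=> /mapP[k]; rewrite mem_iota /= add0n ltnS => hk ->; exists k. Qed.

Lemma fdup_mem u k : k <= u x -> vdup x u k \in fdup u.
Proof. by move=> hk; apply/mapP; exists k; rewrite // mem_iota add0n ltnS. Qed.

Lemma Ldup_memP L p : reflect (exists2 u : monom n, u \in L & p \in fdup u) (p \in Ldup L).
Proof. exact: flatten_mapP. Qed.

Lemma uniq_Ldup L : uniq L -> uniq (Ldup L).
Proof.
elim: L => [|u L IH] // /andP[uL uqL].
change (uniq (fdup u ++ Ldup L)); rewrite cat_uniq IH // andbT; apply/andP; split.
  rewrite /fdup map_inj_in_uniq ?iota_uniq // => a b; rewrite !mem_iota !add0n !ltnS => ha hb E.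
  by case: (vdup_inj ha hb E).
apply/hasP=> [[p /Ldup_memP[u' u'L pf] pu]].
have [k hk Ep] := mem_fdup pf; have [k' hk' Ep'] := mem_fdup pu.
have [E _] := vdup_inj hk hk' (etrans (esym Ep) Ep').
by move: uL; rewrite -E u'L.
Qed.

Lemma mdvd_liftP (a b : monom n.+1) :
  (forall j, a (lift ord_max j) <= b (lift ord_max j)) -> a ord_max <= b ord_max -> mdvd a b.
Proof. move=> H1 H2; apply/mdvdP=> i; by case: (unliftP ord_max i) => [j ->|->]. Qed.

Lemma mdeg_split u : mdeg u = u x + \sum_(i < n | i != x) u i.
Proof. by rewrite /mdeg (bigD1 x). Qed.

Lemma core (L1 : seq (monom n)) u k (D : nat) (V : {set 'I_n}) :
  (forall g, g \in L1 -> mdeg g = D) -> mdeg u = D -> u \notin L1 -> k <= u x ->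
  (forall w, in_mideal L1 (mmul w u) = [exists i in V, 0 < w i]) ->
  colon_gen_by_vars (Ldup L1 ++ [seq vdup x u j | j <- iota 0 k]) (vdup x u k).
Proof.
move=> HD uD uL hk HV.
exists [set i : 'I_n.+1 | if unlift ord_max i is Some j then (j \in V) || ((j == x) && (0 < k)) else (x \in V)].
move=> w; apply/idP/idP.
  move=> /in_midealP[q]; rewrite mem_cat => /orP[/Ldup_memP[uj ujL qf] | /mapP[j jI ->]] /mdvdP Hq.
    have [j hj Eq] := mem_fdup qf; subst q.
    pose phi : monom n := [ffun i => w (lift ord_max i) + (i == x) * w ord_max].
    have : in_mideal L1 (mmul phi u).
      apply/in_midealP; exists uj => //; apply/mdvdP => i; rewrite !mmulE ffunE.
      have := Hq (lift ord_max i); have := Hq ord_max; rewrite !mmulE !vdup_lift !vdup_max.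
      case: (i =P x) => [->|_] /=; lia.
    rewrite HV => /existsP[z /andP[zV]]; rewrite ffunE.
    case: (z =P x) => [E|ne] /= hz; last first.
      by apply/existsP; exists (lift ord_max z); rewrite inE liftK zV /=; lia.
    subst z; case: (posnP (w (lift ord_max x))) => hw.
      by apply/existsP; exists ord_max; rewrite inE unlift_none zV /=; lia.
    by apply/existsP; exists (lift ord_max x); rewrite inE liftK zV /=.
  move: jI; rewrite mem_iota add0n /= => jk.
  have := Hq (lift ord_max x); rewrite ?mmulE ?mvarE !vdup_lift eqxx => h.
  apply/existsP; exists (lift ord_max x); rewrite inE liftK eqxx /=; apply/andP; split; [apply/orP; right|]; lia.
move=> /existsP[i /andP[]]; rewrite inE.
case: (unliftP ord_max i) => [z ->|->]; rewrite ?liftK ?unlift_none.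
  case/orP => [zV | /andP[/eqP zx k0]] wz.
    have : in_mideal L1 (mmul (mvar z) u).
      by rewrite HV; apply/existsP; exists z; rewrite zV mvarE eqxx.
    move=> /in_midealP[uj ujL /mdvdP Hd].
    have Hdeg : u x <= uj x + 1.
      have h1 := mdeg_split uj; have h2 := mdeg_split (mmul (mvar z) u).
      have h3 : \sum_(i0 < n | i0 != x) uj i0 <= \sum_(i0 < n | i0 != x) (mmul (mvar z) u) i0.
        by apply: leq_sum => i0 _; apply: Hd.
      have h4 : mdeg (mvar z) = 1.
        by rewrite /mdeg (bigD1 z) //= big1 ?mvarE ?eqxx // => i0 /negbTE; rewrite mvarE => ->.
      move: h2; rewrite mdeg_mmul uD h4 mmulE mvarE => h2; move: h1; rewrite (HD _ ujL) => h1.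
      have h5 : (x == z) <= 1 by case: (x == z).
      move: h1 h2 h3 h5; set S1 := \sum_(i0 < n | i0 != x) uj i0; set S2 := \sum_(i0 < n | i0 != x) mmul (mvar z) u i0; case: (x == z); lia.
    apply/in_midealP; case: (leqP k (uj x)) => hkj.
      exists (vdup x uj k); first by rewrite mem_cat; apply/orP; left; apply/Ldup_memP; exists uj => //; exact: fdup_mem.
      apply: mdvd_liftP => [j|]; rewrite ?mmulE ?mvarE ?vdup_lift ?vdup_max //; last lia.
      have := Hd j; rewrite ?mmulE ?mvarE; case: (eqVneq j z) => [->|nz]; rewrite ?eqxx ?(negbTE nz); case: eqP => _ /=; lia.
    exists (vdup x uj (k - 1)).
      rewrite mem_cat; apply/orP; left; apply/Ldup_memP; exists uj => //; apply: fdup_mem; lia.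
    apply: mdvd_liftP => [j|]; rewrite ?mmulE ?mvarE ?vdup_lift ?vdup_max //; last lia.
    have := Hd j; rewrite ?mmulE ?mvarE; case: (eqVneq j z) => [->|nz]; rewrite ?eqxx ?(negbTE nz); case: eqP => [->|_] /=; lia.
  subst z; apply/in_midealP; exists (vdup x u (k - 1)).
    rewrite mem_cat; apply/orP; right; apply/mapP; exists (k - 1) => //; rewrite mem_iota /=; lia.
  apply: mdvd_liftP => [j|]; rewrite ?mmulE ?mvarE ?vdup_lift ?vdup_max //; last lia.
  case: (j =P x) => [Ej|_]; subst => /=; lia.
move=> xV wy.
have : in_mideal L1 (mmul (mvar x) u).
  by rewrite HV; apply/existsP; exists x; rewrite xV mvarE eqxx.
move=> /in_midealP[uj ujL Hd0]; have /mdvdP Hd := Hd0.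
have Hux : uj x = (u x).+1.
  have := Hd x; rewrite ?mmulE ?mvarE eqxx => h.
  case: (ltnP (u x) (uj x)) => h'; first lia.
  have E : uj = u.
    apply: mdvd_eq_deg; last by rewrite HD.
    apply/mdvdP=> i0; have := Hd i0; rewrite ?mmulE ?mvarE; case: (i0 =P x) => [->|_] /=; lia.
  by move: uL; rewrite -E ujL.
apply/in_midealP; exists (vdup x uj k.+1).
  rewrite mem_cat; apply/orP; left; apply/Ldup_memP; exists uj => //; apply: fdup_mem; lia.
apply: mdvd_liftP => [j|]; rewrite ?mmulE ?mvarE ?vdup_lift ?vdup_max //; last lia.
have := Hd j; rewrite ?mmulE ?mvarE; case: (eqVneq j x) => [->|nx]; rewrite ?eqxx ?(negbTE nx) /=; lia.
Qed.

End Core.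

Theorem proposition2p3 (n : nat) (G : seq (monom n)) (x : 'I_n) (s : nat) :
  0 < s -> squarefree G -> equigenerated G ->
  has_linear_quotients (mpow G s) ->
  has_linear_quotients (mpow (dup G x) s).
Proof.
move=> s0 sqf [d Hd] [L [uL ML HLQ]].
have HmM : mingens (mpow G s) =i mpow (mingens G) s := mingens_mpow s Hd.
have LM : forall u, (u \in L) = (u \in mpow (mingens G) s) by move=> u; rewrite -ML HmM.
have LD : forall u, u \in L -> mdeg u = s * d by move=> u; rewrite LM; exact: mpow_deg.
exists (Ldup x L); split.
- exact: uniq_Ldup.
- move=> p; rewrite (mingens_same_deg (k := s * d)).
    apply/idP/idP.
      move=> /(dup_char _ _ _ sqf).1 [u [k [uM hk ->]]].
      by apply/Ldup_memP; exists u; [rewrite LM | exact: fdup_mem].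
    move=> /Ldup_memP[u uL' /mem_fdup[k hk ->]].
    by apply/(dup_char _ _ _ sqf).2; exists u, k; rewrite -LM.
  move=> q /(dup_char _ _ _ sqf).1 [u [k [uM hk ->]]].
  by rewrite mdeg_vdup // (mpow_deg Hd uM).
- apply: LQ_to => A p B E hA.
  have [L1 [u [L2 [C [D' [E1 E2 E3]]]]]] := flatten_split E.
  set k := size C.
  have hsz : size (fdup x u) = (u x).+1 by rewrite /fdup size_map size_iota.
  have hk : k < (u x).+1 by rewrite -hsz E2 size_cat /=; lia.
  have EC : C = [seq vdup x u j | j <- iota 0 k].
    have := congr1 (take k) E2; rewrite take_size_cat // /fdup -map_take take_iota => <-.
    by congr (map _ (iota _ _)); lia.
  have Ep : p = vdup x u k.
    have := congr1 (fun s => nth p s k) E2; rewrite nth_cat ltnn subnn /= => <-.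
    by rewrite /fdup (nth_map 0) ?size_iota // nth_iota.
  rewrite E3 EC Ep.
  have uL1 : u \in L by rewrite E1 mem_cat inE eqxx orbT.
  move: uL; rewrite E1 cat_uniq /= => /and3P[_ /norP[uL1n _] _].
  have HD : forall g, g \in L1 -> mdeg g = s * d.
    by move=> g gL; apply: LD; rewrite E1 mem_cat gL.
  have [V HV] : exists V : {set 'I_n}, forall w, in_mideal L1 (mmul w u) = [exists i in V, 0 < w i].
    case: L1 E1 {E3 HD uL1n} => [|g L1] E1.
      by exists set0 => w; apply/esym/existsP => [[i]]; rewrite inE.
    apply: (LQ_of HLQ E1) => //.
  apply: (core (D := s * d)) => //; exact: LD.
Qed.
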